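(* Consider a $K$-user downlink rate-splitting multiple access (RSMA) system in which a base station with $M$ transmit antennas sends the signal $\mathbf x=\mathbf w_c s_c+\sum_{k=1}^K \mathbf w_k s_k+\boldsymbol\eta_t$, with common-stream beamformer $\mathbf w_c\in\mathbb C^M$ and private-stream beamformers $\mathbf w_k\in\mathbb C^M$, to single-antenna users with effective channels $\mathbf h_k\in\mathbb C^M$, under transceiver hardware impairments and imperfect successive interference cancellation (SIC). The SINR of the private stream of user $k$ is \[ \gamma_{p,k}=\frac{|\mathbf h_k^{\mathrm H}\mathbf w_k|^2}{\sum_{i=1,i\neq k}^K|\mathbf h_k^{\mathrm H}\mathbf w_i|^2+\delta_{\mathrm{SIC}}^2|\mathbf h_k^{\mathrm H}\mathbf w_c|^2+\Phi_{c,k}}, \] where \[ \Phi_{c,k}=\mathbf h_k^{\mathrm H}\big[m_r\mathbf A+m_t(1+m_r)\,\widetilde{\mathrm{diag}}(\mathbf A)\big]\mathbf h_k+(1+m_r)\sigma_k^2,\qquad \mathbf A=\mathbf w_c\mathbf w_c^{\mathrm H}+\sum_{k=1}^K\mathbf w_k\mathbf w_k^{\mathrm H}. \] Consider the design problem of maximizing $U(\gamma_{p,1},\ldots,\gamma_{p,K})$ over $\mathbf w_c,\mathbf w_1,\ldots,\mathbf w_K$ subject to $\|\mathbf w_c\|^2+\sum_{k=1}^K\|\mathbf w_k\|^2\le P_{\max}$, where $U$ is any system utility function that is monotonically nondecreasing with respect to the users' SINRs. Then, when $\delta_{\mathrm{SIC}}\to 1$, the optimal solution of this RSMA problem must satisfy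 $\mathbf w_c^{\ast}=\mathbf 0$, i.e., the optimal strategy allocates no power to the common stream, and RSMA degenerates into space division multiple access (SDMA), whose private-stream SINR is $\frac{|\mathbf h_k^{\mathrm H}\mathbf w_k|^2}{\sum_{i\neq k}|\mathbf h_k^{\mathrm H}\mathbf w_i|^2+\Phi_{c,k}}$.
   Context: $s_c$ is the common data stream (decoded by all users first, then removed by SIC) and $s_k$ the private data stream of user $k$. $\boldsymbol\eta_t\sim\mathcal{CN}(\mathbf 0,m_t\,\widetilde{\mathrm{diag}}(\mathbf A))$ is transmit hardware distortion noise, and the receiver adds distortion noise of power $m_r$ times the undistorted received signal power, with $m_t,m_r\in(0,1)$. $\widetilde{\mathrm{diag}}(\cdot)$ denotes the operator that keeps the diagonal entries of a square matrix and sets all off-diagonal entries to zero. $\sigma_k^2>0$ is the AWGN variance at user $k$. $0\le\delta_{\mathrm{SIC}}\le1$ is the SIC imperfection coefficient (the fraction of the common-stream signal amplitude remaining after SIC). $P_{\max}>0$ is the total transmit power budget. The utility $U$ is a function of the private-stream SINRs $(\gamma_{p,1},\ldots,\gamma_{p,K})$ (e.g., weighted sum rate, proportional fairness, max–min fairness). *)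

(* Defs.v *)
From HB Require Import structures.
From mathcomp Require Import all_boot all_order all_algebra.
From mathcomp Require Import complex.
Set Implicit Arguments. Unset Strict Implicit. Unset Printing Implicit Defensive.
Import Order.TTheory GRing.Theory Num.Theory.
Local Open Scope ring_scope.

Section RSMA.
Variables (R : rcfType) (K M : nat).
Local Notation C := R[i].

Definition hermT m n (X : 'M[C]_(m, n)) : 'M[C]_(n, m) := (map_mx (@conjc R) X)^T.

Definition hdot (h w : 'cV[C]_M) : C := (hermT h *m w) 0 0.

Definition sqmod (z : C) : R := complex.Re z ^+ 2 + complex.Im z ^+ 2.

Definition sqnorm (v : 'cV[C]_M) : R := \sum_(m < M) sqmod (v m 0).

Definition Amat (wc : 'cV[C]_M) (w : 'I_K -> 'cV[C]_M) : 'M[C]_M :=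
  wc *m hermT wc + \sum_(k < K) w k *m hermT (w k).

Definition dtilde (A : 'M[C]_M) : 'M[C]_M := \matrix_(i, j) (if i == j then A i j else 0).

(* Phi_{c,k} = h^H [m_r A + m_t (1+m_r) diag~(A)] h + (1+m_r) sigma_k^2 ;
   the quadratic form is real (A Hermitian), we take its real part. *)
Definition Phi (mt mr : R) (sigma2 : R) (h : 'cV[C]_M) (A : 'M[C]_M) : R :=
  complex.Re ((hermT h *m ((mr%:C)%C *: A + ((mt * (1 + mr))%:C)%C *: dtilde A) *m h) 0 0)
  + (1 + mr) * sigma2.

Definition gamma_rsma (delta mt mr : R) (sigma2 : 'I_K -> R) (h : 'I_K -> 'cV[C]_M)
  (wc : 'cV[C]_M) (w : 'I_K -> 'cV[C]_M) (k : 'I_K) : R :=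
  sqmod (hdot (h k) (w k)) /
  (\sum_(i < K | i != k) sqmod (hdot (h k) (w i))
   + delta ^+ 2 * sqmod (hdot (h k) wc)
   + Phi mt mr (sigma2 k) (h k) (Amat wc w)).

Definition gamma_sdma (mt mr : R) (sigma2 : 'I_K -> R) (h : 'I_K -> 'cV[C]_M)
  (w : 'I_K -> 'cV[C]_M) (k : 'I_K) : R :=
  sqmod (hdot (h k) (w k)) /
  (\sum_(i < K | i != k) sqmod (hdot (h k) (w i))
   + Phi mt mr (sigma2 k) (h k) (Amat 0 w)).

Definition feasible (Pmax : R) (wc : 'cV[C]_M) (w : 'I_K -> 'cV[C]_M) : Prop :=
  sqnorm wc + \sum_(k < K) sqnorm (w k) <= Pmax.

Definition nondecreasing_utility (U : ('I_K -> R) -> R) : Prop :=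
  forall g g' : 'I_K -> R, (forall k, 0 <= g k <= g' k) -> U g <= U g'.

Definition rsma_optimal (U : ('I_K -> R) -> R) (delta mt mr Pmax : R)
  (sigma2 : 'I_K -> R) (h : 'I_K -> 'cV[C]_M) (wc : 'cV[C]_M) (w : 'I_K -> 'cV[C]_M) : Prop :=
  feasible Pmax wc w /\
  forall wc' w', feasible Pmax wc' w' ->
    U (gamma_rsma delta mt mr sigma2 h wc' w') <= U (gamma_rsma delta mt mr sigma2 h wc w).

End RSMA.

(* Main.v *)
Require Import Defs.
From HB Require Import structures.
From mathcomp Require Import all_boot all_order all_algebra.
From mathcomp Require Import complex ring lra.
Import Order.TTheory GRing.Theory Num.Theory.
Local Open Scope ring_scope.

Section H.
Variables (R : rcfType) (K M : nat).
Local Notation C := R[i].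

Lemma Re_add (x y : C) : complex.Re (x + y) = complex.Re x + complex.Re y.
Proof. by case: x; case: y. Qed.

Lemma Re0 : complex.Re (0 : C) = 0. Proof. by []. Qed.

Lemma Re_sum (I : Type) (r : seq I) (P : pred I) (F : I -> C) :
  complex.Re (\sum_(i <- r | P i) F i) = \sum_(i <- r | P i) complex.Re (F i).
Proof. by apply: (big_morph _ Re_add Re0). Qed.

Lemma Re_scal (a : R) (z : C) : complex.Re ((a%:C)%C * z) = a * complex.Re z.
Proof. case: z => x y /=; ring. Qed.

Lemma ReJ (z : C) : complex.Re (z * conjc z) = sqmod z.
Proof. case: z => x y; rewrite /sqmod /=; ring. Qed.

Lemma sqmod_ge0 (z : C) : 0 <= sqmod z.
Proof. rewrite /sqmod; apply: addr_ge0; apply: sqr_ge0. Qed.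

Definition G (h : 'cV[C]_M) (X : 'M[C]_M) : R :=
  complex.Re ((hermT h *m X *m h) 0 0).

Lemma G_add h X Y : G h (X + Y) = G h X + G h Y.
Proof. by rewrite /G mulmxDr mulmxDl mxE Re_add. Qed.

Lemma G_scal h (a : R) X : G h ((a%:C)%C *: X) = a * G h X.
Proof. by rewrite /G -scalemxAr -scalemxAl mxE Re_scal. Qed.

Lemma dtilde_add (X Y : 'M[C]_M) : dtilde (X + Y) = dtilde X + dtilde Y.
Proof. apply/matrixP => i j; rewrite !mxE; case: (i == j) => //; by rewrite addr0. Qed.

Lemma dtilde_scal (a : C) (X : 'M[C]_M) : dtilde (a *: X) = a *: dtilde X.
Proof. apply/matrixP => i j; rewrite !mxE; case: (i == j) => //; by rewrite mulr0. Qed.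

Lemma hermT_conj (v w : 'cV[C]_M) : (hermT w *m v) 0 0 = conjc ((hermT v *m w) 0 0).
Proof.
rewrite !mxE rmorph_sum; apply: eq_bigr => i _.
by rewrite !mxE rmorphM /= conjcK mulrC.
Qed.

Lemma G_outer h (v : 'cV[C]_M) : G h (v *m hermT v) = sqmod (hdot h v).
Proof.
rewrite /G /hdot mulmxA -mulmxA mxE big_ord1 (hermT_conj h v).
by rewrite ReJ.
Qed.

Lemma G_dtilde_outer h (v : 'cV[C]_M) : 0 <= G h (dtilde (v *m hermT v)).
Proof.
rewrite /G mxE Re_sum; apply: sumr_ge0 => j _.
rewrite mxE (bigD1 j) //= big1 ?addr0; last first.
  by move=> i /negbTE ij; rewrite !mxE ij mulr0.
rewrite !mxE eqxx big_ord1 !mxE.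
set a := h j 0; set b := v j 0.
have -> : conjc a * (b * conjc b) * a = (conjc a * b) * conjc (conjc a * b).
  by rewrite rmorphM /= conjcK; ring.
rewrite ReJ; exact: sqmod_ge0.
Qed.

Definition PSDish h (X : 'M[C]_M) := 0 <= G h X /\ 0 <= G h (dtilde X).

Lemma Amat0_ok h (w : 'I_K -> 'cV[C]_M) : PSDish h (Amat 0 w).
Proof.
rewrite /Amat mul0mx add0r.
apply: (big_ind (PSDish h)).
- have d0 : dtilde (0 : 'M[C]_M) = 0 by apply/matrixP => i j; rewrite !mxE; case: (i == j).
  by rewrite /PSDish d0 /G mulmx0 mul0mx mxE.
- move=> X Y [a b] [c d]; rewrite /PSDish dtilde_add !G_add; split; exact: addr_ge0.
- move=> k _; split; [rewrite G_outer; exact: sqmod_ge0 | exact: G_dtilde_outer].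
Qed.

Lemma Phi_eq mt mr s h (X : 'M[C]_M) :
  Phi mt mr s h X = mr * G h X + (mt * (1 + mr)) * G h (dtilde X) + (1 + mr) * s.
Proof. by rewrite /Phi -/(G h _) G_add !G_scal. Qed.

Lemma Amat_split (wc : 'cV[C]_M) (w : 'I_K -> 'cV[C]_M) : Amat wc w = wc *m hermT wc + Amat 0 w.
Proof. by rewrite /Amat mul0mx add0r. Qed.

Lemma Phi_split mt mr s h (wc : 'cV[C]_M) (w : 'I_K -> 'cV[C]_M) :
  Phi mt mr s h (Amat wc w) = Phi mt mr s h (Amat 0 w) + mr * sqmod (hdot h wc)
     + (mt * (1 + mr)) * G h (dtilde (wc *m hermT wc)).
Proof.
rewrite (Amat_split wc w) !Phi_eq dtilde_add !G_add G_outer.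
set a := G h (Amat 0 w); set b := G h (dtilde (Amat 0 w)); ring.
Qed.

Lemma key (mt mr : R) (sigma2 : 'I_K -> R) (h : 'I_K -> 'cV[C]_M) wc w k :
  0 < mt -> 0 < mr -> 0 < sigma2 k ->
  0 <= gamma_rsma 1 mt mr sigma2 h wc w k <= gamma_sdma mt mr sigma2 h w k.
Proof.
move=> hmt hmr hs.
rewrite /gamma_rsma /gamma_sdma expr1n mul1r Phi_split.
have [p1 p2] := Amat0_ok (h k) w.
have p3 := G_dtilde_outer (h k) wc.
have q := sqmod_ge0 (hdot (h k) wc).
have n := sqmod_ge0 (hdot (h k) (w k)).
have S : 0 <= \sum_(i < K | i != k) sqmod (hdot (h k) (w i)).
  by apply: sumr_ge0 => i _; exact: sqmod_ge0.
have c0 : 0 < mt * (1 + mr) by apply: mulr_gt0 => //; lra.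
have e4 := mulr_ge0 (ltW c0) p3.
have e3 := mulr_ge0 (ltW hmr) q.
have P0 : (1 + mr) * sigma2 k <= Phi mt mr (sigma2 k) (h k) (Amat 0 w).
  rewrite Phi_eq.
  have e1 := mulr_ge0 (ltW hmr) p1.
  have e2 := mulr_ge0 (ltW c0) p2.
  lra.
have e5 : 0 < (1 + mr) * sigma2 k by apply: mulr_gt0 => //; lra.
set S0 := \sum_(i < K | _) _ in S *.
set P := Phi _ _ _ _ _ in P0 *.
set D0 := S0 + P.
have D0p : 0 < D0 by rewrite /D0; lra.
set D1 := _ + _ + (P + _ + _).
have D1p : 0 < D1 by rewrite /D1; lra.
have D01 : D0 <= D1 by rewrite /D1 /D0; lra.
apply/andP; split; first by apply: divr_ge0 => //; exact: ltW.
apply: ler_wpM2l => //.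
by rewrite lef_pV2 ?posrE.
Qed.

Lemma rsma0 delta mt mr (sigma2 : 'I_K -> R) (h : 'I_K -> 'cV[C]_M) w k :
  gamma_rsma delta mt mr sigma2 h 0 w k = gamma_sdma mt mr sigma2 h w k.
Proof.
rewrite /gamma_rsma /gamma_sdma.
have -> : hdot (h k) 0 = 0 by rewrite /hdot mulmx0 mxE.
have -> : sqmod (0 : C) = 0 by rewrite /sqmod /= expr2 mulr0 addr0.
by rewrite mulr0 addr0.
Qed.

End H.

Theorem theorem1 (R : rcfType) (K M : nat) (h : 'I_K -> 'cV[R[i]]_M)
  (mt mr Pmax delta : R) (sigma2 : 'I_K -> R) (U : ('I_K -> R) -> R) :
  0 < mt < 1 -> 0 < mr < 1 -> (forall k, 0 < sigma2 k) -> 0 < Pmax ->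
  nondecreasing_utility U -> delta = 1 ->
  (* the RSMA optimum is attained with no common-stream power *)
  (forall wc w, rsma_optimal U delta mt mr Pmax sigma2 h wc w ->
     rsma_optimal U delta mt mr Pmax sigma2 h 0 w) /\
  (* with w_c = 0, RSMA reduces to SDMA *)
  (forall w k, gamma_rsma delta mt mr sigma2 h 0 w k = gamma_sdma mt mr sigma2 h w k) /\
  (* every feasible RSMA design is matched by a feasible SDMA design *)
  (forall wc w, feasible Pmax wc w ->
     exists w', feasible Pmax 0 w' /\
       U (gamma_rsma delta mt mr sigma2 h wc w) <= U (gamma_sdma mt mr sigma2 h w')).
Proof.
move=> /andP[mt0 _] /andP[mr0 _] hs _ hU ->.
have feas0 : forall (wc : 'cV[R[i]]_M) (w : 'I_K -> 'cV[R[i]]_M),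
    feasible Pmax wc w -> feasible Pmax 0 w.
  move=> wc w; rewrite /feasible.
  have -> : sqnorm (0 : 'cV[R[i]]_M) = 0.
    by rewrite /sqnorm big1 // => m _; rewrite mxE /sqmod /= expr2 mulr0 addr0.
  have : 0 <= sqnorm wc by rewrite /sqnorm; apply: sumr_ge0 => m _; exact: sqmod_ge0.
  move=> ? ?; lra.
have Umono : forall wc w, U (gamma_rsma 1 mt mr sigma2 h wc w) <= U (gamma_sdma mt mr sigma2 h w).
  by move=> wc w; apply: hU => k; apply: key.
have Umono0 : forall wc w, U (gamma_rsma 1 mt mr sigma2 h wc w) <= U (gamma_rsma 1 mt mr sigma2 h 0 w).
  by move=> wc w; apply: hU => k; rewrite rsma0; apply: key.
split; last split.
- move=> wc w [F Opt]; split; first exact: feas0 F.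
  move=> wc' w' F'.
  apply: le_trans (Opt _ _ F') _.
  exact: Umono0.
- by move=> w k; apply: rsma0.
- move=> wc w F; exists w; split; [exact: feas0 F | exact: Umono].
Qed.
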